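(* A set $S\subseteq\mathbb{N}^{\mathbb{N}}$ is guessable if and only if it is defined by some sentence $\forall x\,\exists y\,\phi$ of $\mathscr{L}_{\max}$ and also by some sentence $\exists x\,\forall y\,\psi$ of $\mathscr{L}_{\max}$, where $\phi$ and $\psi$ are quantifier-free.
   Context: A function $G:\mathbb{N}^{<\mathbb{N}}\to\{0,1\}$ ($\mathbb{N}^{<\mathbb{N}}$ = finite sequences of naturals) is a guesser for $S\subseteq\mathbb{N}^{\mathbb{N}}$ if for every $f:\mathbb{N}\to\mathbb{N}$ there is $m>0$ such that for all $n>m$, $G(f(0),\ldots,f(n))$ equals $1$ if $f\in S$ and $0$ if $f\notin S$; $S$ is guessable if it has a guesser. The language $\mathscr{L}_{\max}$ is a first-order language extended with ellipses: constant symbols $\mathbf{n}$ (also $\bar n$) for each $n\in\mathbb{N}$; an $n$-ary function symbol $\tilde w$ for each $w:\mathbb{N}^n\to\mathbb{N}$ ($n>0$); an $n$-ary predicate symbol $\tilde p$ for each $p\subseteq\mathbb{N}^n$ ($n>0$); an $\mathbb{N}^{<\mathbb{N}}$-ary function symbol $\tilde G$ for each $G:\mathbb{N}^{<\mathbb{N}}\to\mathbb{N}$ (applicable to any finite number of arguments); a unary function symbol $\mathbf{f}$; and a symbol $\cdots_x$ for each variable $x$. Besides the usual terms, for $\mathbb{N}^{<\mathbb{N}}$-ary $G$, terms $u,v$ and variable $x$, $G(u(\mathbf{0}),\cdots_x,u(v))$ is a term with free variables $(FV(u)\setminus\{x\})\cup FV(v)$. Formulas are built as usual. For $f:\mathbb{N}\to\mathbb{N}$,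 $\mathscr{M}_f$ is the structure on $\mathbb{N}$ interpreting every symbol as the object it names and $\mathbf{f}$ as $f$; terms are evaluated as usual, plus $G(u(\mathbf{0}),\cdots_x,u(v))^{s}=G\big(u(x|\mathbf{0})^{s},\ldots,u(x|\overline{v^{s}})^{s}\big)$ under an assignment $s$, where $u(x|c)$ is substitution of the constant $c$ for $x$ in $u$. A sentence $\phi$ defines $S\subseteq\mathbb{N}^{\mathbb{N}}$ if for every $f:\mathbb{N}\to\mathbb{N}$, $\mathscr{M}_f\models\phi$ iff $f\in S$. *)

(* Defs.v *)
From mathcomp Require Import all_boot.
Set Implicit Arguments.
Unset Strict Implicit.
Unset Printing Implicit Defensive.

Definition var := nat.

(* Terms of L_max.  Symbols are identified with the objects they name. *)
Inductive term : Type :=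
| tvar   (x : var)
| tconst (n : nat)
| tfun   (n : nat) (w : ('I_n.+1 -> nat) -> nat)
         (args : 'I_n.+1 -> term)
| tG     (G : seq nat -> nat) (k : nat) (args : 'I_k -> term)
| tf     (t : term)
| tell   (G : seq nat -> nat) (x : var) (u v : term).

Inductive formula : Type :=
| feq   (t1 t2 : term)
| fpred (n : nat) (p : ('I_n.+1 -> nat) -> Prop) (args : 'I_n.+1 -> term)
| fnot  (a : formula)
| fand  (a b : formula)
| for_  (a b : formula)
| fimp  (a b : formula)
| fall  (x : var) (a : formula)
| fex   (x : var) (a : formula).

Fixpoint tfree (z : var) (t : term) : Prop :=
  match t with
  | tvar x => z = x
  | tconst _ => False
  | tfun n _ args => exists i, tfree z (args i)
  | tG _ k args => exists i, tfree z (args i)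
  | tf t => tfree z t
  | tell _ x u v => (tfree z u /\ z <> x) \/ tfree z v
  end.

Fixpoint ffree (z : var) (a : formula) : Prop :=
  match a with
  | feq t1 t2 => tfree z t1 \/ tfree z t2
  | fpred n _ args => exists i, tfree z (args i)
  | fnot a => ffree z a
  | fand a b | for_ a b | fimp a b => ffree z a \/ ffree z b
  | fall x a | fex x a => ffree z a /\ z <> x
  end.

Definition sentence (a : formula) : Prop := forall z, ~ ffree z a.

Fixpoint qfree (a : formula) : Prop :=
  match a with
  | feq _ _ | fpred _ _ _ => True
  | fnot a => qfree a
  | fand a b | for_ a b | fimp a b => qfree a /\ qfree b
  | fall _ _ | fex _ _ => False
  end.

Definition upd (s : var -> nat) (x : var) (k : nat) : var -> nat :=
  fun z => if z == x then k else s z.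

(* Evaluation of terms in M_f under the assignment s.  The ellipsis term
   G(u(0),..._x,u(v)) evaluates to G(u^{s[x:=0]}, ..., u^{s[x:=v^s]}),
   i.e. to G(u(x|0)^s, ..., u(x|v^s)^s). *)
Fixpoint teval (f : nat -> nat) (s : var -> nat) (t : term) : nat :=
  match t with
  | tvar x => s x
  | tconst n => n
  | tfun n w args => w (fun i => teval f s (args i))
  | tG G k args => G [seq teval f s (args i) | i <- enum 'I_k]
  | tf t => f (teval f s t)
  | tell G x u v =>
      G [seq teval f (upd s x k) u | k <- iota 0 (teval f s v).+1]
  end.

Fixpoint sat (f : nat -> nat) (s : var -> nat) (a : formula) : Prop :=
  match a with
  | feq t1 t2 => teval f s t1 = teval f s t2
  | fpred n p args => p (fun i => teval f s (args i))
  | fnot a => ~ sat f s a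
  | fand a b => sat f s a /\ sat f s b
  | for_ a b => sat f s a \/ sat f s b
  | fimp a b => sat f s a -> sat f s b
  | fall x a => forall k, sat f (upd s x k) a
  | fex x a => exists k, sat f (upd s x k) a
  end.

(* M_f |= phi for a sentence phi (truth is independent of the assignment). *)
Definition models (f : nat -> nat) (a : formula) : Prop :=
  forall s : var -> nat, sat f s a.

Definition defines (a : formula) (S : (nat -> nat) -> Prop) : Prop :=
  sentence a /\ forall f : nat -> nat, models f a <-> S f.

(* Guessers and guessability; G takes values in {0,1} = bool. *)
Definition guesser (G : seq nat -> bool) (S : (nat -> nat) -> Prop) : Prop :=
  forall f : nat -> nat, exists m : nat, 0 < m /\
    forall n : nat, m < n ->
      (S f -> G (mkseq f n.+1) = true) /\ (~ S f -> G (mkseq f n.+1) = false).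

Definition guessable (S : (nat -> nat) -> Prop) : Prop :=
  exists G : seq nat -> bool, guesser G S.

(* Main.v *)
Require Import Defs.
From mathcomp Require Import all_boot.
From mathcomp Require Import zify.
From Stdlib Require Import Classical ClassicalEpsilon FunctionalExtensionality.

Definition agree (n : nat) (f g : nat -> nat) := forall i, i < n -> f i = g i.

Lemma agree_mono m n f g : m <= n -> agree n f g -> agree m f g.
Proof. move=> hmn h i hi; apply: h; exact: leq_trans hi hmn. Qed.
Arguments agree_mono {m n f g}.

Lemma bound K (P : nat -> nat -> Prop) :
  (forall i m m', m <= m' -> P i m -> P i m') ->
  (forall i, i < K -> exists m, P i m) -> exists N, forall i, i < K -> P i N.
Proof.
move=> mono; elim: K => [|K IH] H; first by exists 0 => i; rewrite ltn0.
have [N HN] := IH (fun i hi => H i (leqW hi)).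
have [M HM] := H K (ltnSn K).
exists (maxn N M) => i; rewrite ltnS leq_eqVlt => /orP [/eqP -> | hi].
  exact: mono (leq_maxr N M) HM.
exact: mono (leq_maxl N M) (HN i hi).
Qed.

Lemma bound_nat K (Q : nat -> (nat -> nat) -> Prop) f :
  (forall i, i < K -> exists n, forall g, agree n f g -> Q i g) ->
  exists n, forall i, i < K -> forall g, agree n f g -> Q i g.
Proof.
move=> H; apply: (@bound K (fun i m => forall g, agree m f g -> Q i g)) => //.
move=> i m m' hm h g hg; apply: h; exact: agree_mono hm hg.
Qed.

Lemma bound_ord K (Q : 'I_K -> (nat -> nat) -> Prop) f :
  (forall i, exists n, forall g, agree n f g -> Q i g) ->
  exists n, forall i g, agree n f g -> Q i g.
Proof.
move=> H.
have [n Hn] : exists n, forall i, i < K -> forall g, agree n f g ->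
    forall j : 'I_K, val j = i -> Q j g.
  apply: bound_nat => i hi.
  have [m hm] := H (Ordinal hi).
  exists m => g hg j hj.
  have -> : j = Ordinal hi by apply: val_inj.
  exact: hm.
by exists n => i g hg; apply: (Hn i (ltn_ord i) g hg).
Qed.

Lemma teval_free t : forall f s s', (forall z, tfree z t -> s z = s' z) ->
  teval f s t = teval f s' t.
Proof.
elim: t => [x|c|n w args IH|G k args IH|t IH|G x u IHu v IHv] f s s' H /=.
- by apply: H.
- by [].
- congr (w _); apply: functional_extensionality => i; apply: IH => z hz.
  by apply: H; exists i.
- congr (G _); apply: eq_map => i; apply: IH => z hz.
  by apply: H; exists i.
- by rewrite (IH f s s' H).
- rewrite (IHv f s s'); last by move=> z hz; apply: H; right.
  have hk k : teval f (upd s x k) u = teval f (upd s' x k) u.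
    apply: IHu => z hz.
    rewrite /upd; case: (z =P x) => // hzx; apply: H; by left.
  congr (G _); rewrite hk; congr (_ :: _); apply: eq_map => k; exact: hk.
Qed.

Lemma sat_free a : forall f s s', (forall z, ffree z a -> s z = s' z) ->
  (sat f s a <-> sat f s' a).
Proof.
elim: a => [t1 t2|n p args|a IH|a IHa b IHb|a IHa b IHb|a IHa b IHb|x a IH|x a IH]
  f s s' H /=.
- rewrite (teval_free t1 f s s'); last by move=> z hz; apply: H; left.
  rewrite (teval_free t2 f s s') //; by move=> z hz; apply: H; right.
- have -> // : (fun i => teval f s (args i)) = (fun i => teval f s' (args i)).
  apply: functional_extensionality => i; apply: teval_free => z hz.
  by apply: H; exists i.
- have := IH f s s' H; tauto.
- have := IHa f s s' (fun z hz => H z (or_introl hz)).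
  have := IHb f s s' (fun z hz => H z (or_intror hz)); tauto.
- have := IHa f s s' (fun z hz => H z (or_introl hz)).
  have := IHb f s s' (fun z hz => H z (or_intror hz)); tauto.
- have := IHa f s s' (fun z hz => H z (or_introl hz)).
  have := IHb f s s' (fun z hz => H z (or_intror hz)); tauto.
- have hk k : sat f (upd s x k) a <-> sat f (upd s' x k) a.
    apply: IH => z hz; rewrite /upd; case: eqP => // hzx; by apply: H.
  split => h k; [apply/(hk k).1 | apply/(hk k).2]; exact: h.
- have hk k : sat f (upd s x k) a <-> sat f (upd s' x k) a.
    apply: IH => z hz; rewrite /upd; case: eqP => // hzx; by apply: H.
  split => -[k h]; exists k; [apply/(hk k).1 | apply/(hk k).2]; exact: h.
Qed.

Lemma teval_cont t : forall f s, exists n, forall g, agree n f g ->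
  teval g s t = teval f s t.
Proof.
elim: t => [x|c|n w args IH|G k args IH|t IH|G x u IHu v IHv] f s /=.
- by exists 0.
- by exists 0.
- have [N HN] := @bound_ord _
    (fun i g => teval g s (args i) = teval f s (args i)) f (fun i => IH i f s).
  exists N => g hg; congr (w _); apply: functional_extensionality => i; exact: HN.
- have [N HN] := @bound_ord _
    (fun i g => teval g s (args i) = teval f s (args i)) f (fun i => IH i f s).
  exists N => g hg; congr (G _); apply: eq_map => i; exact: HN.
- have [N HN] := IH f s.
  exists (maxn N (teval f s t).+1) => g hg.
  rewrite HN; last by apply: (agree_mono _ hg); apply: leq_maxl.
  symmetry; apply: hg; exact: leq_maxr.
- have [Nv HNv] := IHv f s.
  have [Nu HNu] := @bound_nat (teval f s v).+1
    (fun k g => teval g (upd s x k) u = teval f (upd s x k) u) f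
    (fun k _ => IHu f (upd s x k)).
  exists (maxn Nv Nu) => g hg.
  rewrite HNv; last by apply: (agree_mono _ hg); apply: leq_maxl.
  have hg' := agree_mono (leq_maxr _ _) hg.
  congr (G _); rewrite HNu //; congr (_ :: _).
  apply/eq_in_map => k; rewrite mem_iota => /andP [_ hk].
  apply: HNu => //; lia.
Qed.

Lemma sat_cont a : qfree a -> forall f s, exists n, forall g, agree n f g ->
  (sat g s a <-> sat f s a).
Proof.
elim: a => [t1 t2|n p args|a IH|a IHa b IHb|a IHa b IHb|a IHa b IHb|x a IH|x a IH]
  /= hq f s; try by case: hq.
- have [N1 H1] := teval_cont t1 f s; have [N2 H2] := teval_cont t2 f s.
  exists (maxn N1 N2) => g hg.
  rewrite H1; last by apply: (agree_mono _ hg); apply: leq_maxl.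
  rewrite H2 //; apply: (agree_mono _ hg); exact: leq_maxr.
- have [N HN] := @bound_ord _
    (fun i g => teval g s (args i) = teval f s (args i)) f
    (fun i => teval_cont (args i) f s).
  exists N => g hg.
  have -> // : (fun i => teval g s (args i)) = (fun i => teval f s (args i)).
  apply: functional_extensionality => i; exact: HN.
- have [N HN] := IH hq f s; exists N => g hg; have := HN g hg; tauto.
- case: hq => qa qb; have [N1 H1] := IHa qa f s; have [N2 H2] := IHb qb f s.
  exists (maxn N1 N2) => g hg.
  have := H1 g (agree_mono (leq_maxl _ _) hg).
  have := H2 g (agree_mono (leq_maxr _ _) hg); tauto.
- case: hq => qa qb; have [N1 H1] := IHa qa f s; have [N2 H2] := IHb qb f s.
  exists (maxn N1 N2) => g hg.
  have := H1 g (agree_mono (leq_maxl _ _) hg).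
  have := H2 g (agree_mono (leq_maxr _ _) hg); tauto.
- case: hq => qa qb; have [N1 H1] := IHa qa f s; have [N2 H2] := IHb qb f s.
  exists (maxn N1 N2) => g hg.
  have := H1 g (agree_mono (leq_maxl _ _) hg).
  have := H2 g (agree_mono (leq_maxr _ _) hg); tauto.
Qed.

Definition s0 : var -> nat := fun _ => 0.

Lemma models_s0 f a : sentence a -> (models f a <-> sat f s0 a).
Proof.
move=> hs; split => [h|h s]; first exact: h.
apply/(sat_free a f s s0) => // z hz; by case: (hs z).
Qed.

Lemma agree_mkseq n f g :
  agree n (fun i => nth 0 (mkseq f n) i) g <-> agree n f g.
Proof.
split => h i hi; [rewrite -h // | rewrite -h //]; by rewrite nth_mkseq.
Qed.

Definition Dec (sg : seq nat) (P : (nat -> nat) -> Prop) :=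
  forall g, agree (size sg) (fun i => nth 0 sg i) g -> P g.

Lemma guess_from (S : (nat -> nat) -> Prop) (Phi Psi : nat -> nat -> (nat -> nat) -> Prop) :
  (forall k k' f, exists n, forall g, agree n f g -> (Phi k k' g <-> Phi k k' f)) ->
  (forall k k' f, exists n, forall g, agree n f g -> (Psi k k' g <-> Psi k k' f)) ->
  (forall f, S f <-> forall k, exists k', Phi k k' f) ->
  (forall f, S f <-> exists k, forall k', Psi k k' f) ->
  guessable S.
Proof.
move=> cPhi cPsi H1 H2.
pose A sg m := forall k, k < m -> exists k', Dec sg (Phi k k').
pose B sg m := forall k, k < m -> exists k', Dec sg (fun g => ~ Psi k k' g).
exists (fun sg => if excluded_middle_informative (exists m, A sg m /\ ~ B sg m)
                  then true else false).
move=> f.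
have agf n : agree n.+1 (fun i => nth 0 (mkseq f n.+1) i) f.
  by apply/agree_mkseq => i.
case: (classic (S f)) => Sf.
- have [x0 hx0] := (H2 f).1 Sf.
  have hA := (H1 f).1 Sf.
  have [N HN] : exists N, forall k, k < x0.+1 ->
      exists k', forall g, agree N f g -> Phi k k' g.
    apply: bound.
    + move=> i m m' hm [k' hk']; exists k' => g hg; apply: hk'; exact: agree_mono hm hg.
    + move=> i _; have [k' hk'] := hA i; have [n hn] := cPhi i k' f.
      by exists n, k' => g hg; apply/(hn g hg).
  exists N.+1; split => // n hn; split => [_|//].
  case: excluded_middle_informative => [//|hneg]; exfalso; apply: hneg.
  exists x0.+1; split.
  + move=> k hk; have [k' hk'] := HN k hk; exists k' => g.
    rewrite size_mkseq => /agree_mkseq hg; apply: hk'.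
    apply: (agree_mono _ hg); lia.
  + move=> hB; have [k' hk'] := hB x0 (ltnSn _).
    apply: (hk' f); last exact: hx0.
    rewrite size_mkseq; exact: agf.
- have hB : forall k, exists k', ~ Psi k k' f.
    move=> k; apply: NNPP => hn; apply: Sf; apply/(H2 f); exists k => k'.
    apply: NNPP => hp; apply: hn; by exists k'.
  have [x1 hx1] : exists x1, forall k', ~ Phi x1 k' f.
    apply: NNPP => hn; apply: Sf; apply/(H1 f) => k.
    apply: NNPP => hp; apply: hn; exists k => k' hk'; apply: hp; by exists k'.
  have [N HN] : exists N, forall k, k < x1.+1 ->
      exists k', forall g, agree N f g -> ~ Psi k k' g.
    apply: bound.
    + move=> i m m' hm [k' hk']; exists k' => g hg; apply: hk'; exact: agree_mono hm hg.
    + move=> i _; have [k' hk'] := hB i; have [n hn] := cPsi i k' f.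
      by exists n, k' => g hg /(hn g hg).
  exists N.+1; split => // n hn; split => [//|_].
  case: excluded_middle_informative => [[m [hAm hBm]]|//]; exfalso.
  have hm : m <= x1.
    rewrite leqNgt; apply/negP => hlt.
    have [k' hk'] := hAm x1 hlt; apply: (hx1 k'); apply: hk'.
    rewrite size_mkseq; exact: agf.
  apply: hBm => k hk; have [k' hk'] := HN k (ltnW (leq_trans hk hm)); exists k' => g.
  rewrite size_mkseq => /agree_mkseq hg; apply: hk'.
  apply: (agree_mono _ hg); lia.
Qed.

Definition o0 : 'I_3 := @Ordinal 3 0 isT.
Definition o1 : 'I_3 := @Ordinal 3 1 isT.
Definition o2 : 'I_3 := @Ordinal 3 2 isT.

Definition Tg (G : seq nat -> bool) : term :=
  tell (fun l => nat_of_bool (G l)) 0 (tf (tvar 0)) (tvar 1).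

Definition args3 G : 'I_3 -> term :=
  fun i => match val i with 0 => tvar 0 | 1 => tvar 1 | _ => Tg G end.

Definition p1 (a : 'I_3 -> nat) : Prop := a o0 < a o1 /\ a o2 = 1.
Definition p2 (a : 'I_3 -> nat) : Prop := a o0 < a o1 -> a o2 = 1.

Lemma teval_Tg G f s : teval f s (Tg G) = nat_of_bool (G (mkseq f (s 1).+1)).
Proof. by []. Qed.

Lemma nb1 b : (nat_of_bool b = 1) <-> b = true.
Proof. by case: b. Qed.

Lemma p1_eval G f s : p1 (fun i => teval f s (args3 G i)) <->
  s 0 < s 1 /\ G (mkseq f (s 1).+1) = true.
Proof.
change (s 0 < s 1 /\ nat_of_bool (G (mkseq f (s 1).+1)) = 1 <->
  s 0 < s 1 /\ G (mkseq f (s 1).+1) = true).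
by case: (G (mkseq f (s 1).+1)); split => -[]...
Qed.

Lemma p2_eval G f s : p2 (fun i => teval f s (args3 G i)) <->
  (s 0 < s 1 -> G (mkseq f (s 1).+1) = true).
Proof.
change ((s 0 < s 1 -> nat_of_bool (G (mkseq f (s 1).+1)) = 1) <->
  (s 0 < s 1 -> G (mkseq f (s 1).+1) = true)).
case: (G (mkseq f (s 1).+1)) => /=; split => h /h //.
Qed.

Lemma args3_free {G z i} : tfree z (args3 G i) -> z = 0 \/ z = 1.
Proof.
case: i => [[|[|[|m]]] hm] /=; rewrite /args3 /=; try tauto.
Qed.

Theorem theorem4p7 (S : (nat -> nat) -> Prop) :
  guessable S <->
  (exists (x y : var) (phi : formula), qfree phi /\ defines (fall x (fex y phi)) S) /\
  (exists (x y : var) (psi : formula), qfree psi /\ defines (fex x (fall y psi)) S).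
Proof.
split.
- move=> [G hG].
  have key f : exists m, forall n, m < n ->
      (S f -> G (mkseq f n.+1) = true) /\ (~ S f -> G (mkseq f n.+1) = false).
    by have [m [_ hm]] := hG f; exists m.
  split.
  + exists 0, 1, (fpred p1 (args3 G)); split => //; split.
      move=> z /= [[[i hi] hz1] hz0]; have := args3_free hi; tauto.
    move=> f; split => h.
    * have [m hm] := key f; apply: NNPP => nS.
      have [k' /p1_eval [hk hG']] := h s0 m.
      rewrite /upd /= in hk hG'.
      by rewrite ((hm k' hk).2 nS) in hG'.
    * move=> s k; have [m hm] := key f.
      exists (maxn k m).+1; apply/p1_eval; rewrite /upd /=; split.
        by rewrite ltnS leq_maxl.
      apply: (hm _ _).1 => //; by rewrite ltnS leq_maxr.
  + exists 0, 1, (fpred p2 (args3 G)); split => //; split.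
      move=> z /= [[[i hi] hz1] hz0]; have := args3_free hi; tauto.
    move=> f; split => h.
    * have [m hm] := key f; apply: NNPP => nS.
      have [k hk] := h s0.
      have /p2_eval := hk (maxn k m).+1; rewrite /upd /= => hG'.
      have := hG' (leq_maxl k m).
      by rewrite ((hm (maxn k m).+1 (leq_maxr k m)).2 nS).
    * move=> s; have [m hm] := key f; exists m => k'.
      apply/p2_eval; rewrite /upd /= => hk.
      exact: (hm _ hk).1.
- move=> [[x [y [phi [qphi [sphi dphi]]]]] [x' [y' [psi [qpsi [spsi dpsi]]]]]].
  apply: (@guess_from S (fun k k' g => sat g (upd (upd s0 x k) y k') phi)
                        (fun k k' g => sat g (upd (upd s0 x' k) y' k') psi)).
  + move=> k k' f; exact: sat_cont.
  + move=> k k' f; exact: sat_cont.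
  + move=> f; rewrite -dphi models_s0 //.
  + move=> f; rewrite -dpsi models_s0 //.
Qed.
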